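(* Let $R$ be a preference profile and suppose that $x$ is a connector in $R$. Let $y\in A_x$. Then $A_y\subseteq A_x$ unless $x\succ_R A\setminus\{x,y\}$ (i.e., unless $x\succ_R z$ for all $z\in A\setminus\{x,y\}$).
   Context: Let $A$ be a finite set of alternatives; a preference profile $R$ assigns a strict total order $\succ_i$ on $A$ to each voter $i$ of a finite non-empty electorate. The majority margin is $g_R(x,y)=|\{i: x\succ_i y\}|-|\{i: y\succ_i x\}|$; $x\succsim_R y$ iff $g_R(x,y)\ge0$, with strict part $\succ_R$. For any set of alternatives $B$ and profile $R$ on $B$, a non-empty $X\subseteq B$ is dominant if $x\succ_R y$ for all $x\in X,y\in B\setminus X$; the top cycle $\mathrm{TC}(R)$ is the inclusion-smallest dominant set. For $x\in A$, $R|_{A\setminus\{x\}}$ denotes the profile on $A\setminus\{x\}$ obtained by restricting each voter's order. The connected set of $x$ is $A_x=\mathrm{TC}(R)\setminus(\mathrm{TC}(R|_{A\setminus\{x\}})\cup\{x\})$, and $x$ is a connector in $R$ if $A_x\neq\emptyset$. *)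

(* Defs.v *)
From mathcomp Require Import all_boot all_order all_algebra.
Set Implicit Arguments. Unset Strict Implicit. Unset Printing Implicit Defensive.
Import Order.TTheory GRing.Theory Num.Theory.
Local Open Scope ring_scope.

Section Voting.
Variables (A V : finType).

Definition strict_total (r : rel A) : Prop :=
  irreflexive r /\ transitive r /\ (forall x y, x != y -> r x y || r y x).

(* A preference profile: each voter i has a strict total order (r i x y = "x >_i y"). *)
Definition profile (pr : V -> rel A) : Prop := forall i, strict_total (pr i).

Definition margin (pr : V -> rel A) (x y : A) : int :=
  (#|[set i | pr i x y]|%:Z - #|[set i | pr i y x]|%:Z).

Definition wmaj (pr : V -> rel A) (x y : A) : bool := 0 <= margin pr x y.
Definition smaj (pr : V -> rel A) (x y : A) : bool := wmaj pr x y && ~~ wmaj pr y x.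

(* Dominant subsets of the alternative set B (profile restricted to B;
   restriction does not change pairwise margins between elements of B). *)
Definition dominant (pr : V -> rel A) (B X : {set A}) : bool :=
  [&& X != set0, X \subset B &
      [forall x in X, forall y in B :\: X, smaj pr x y]].

(* Top cycle of the profile restricted to B: the inclusion-smallest dominant set,
   realized as the intersection of all dominant subsets of B. *)
Definition TC (pr : V -> rel A) (B : {set A}) : {set A} :=
  \bigcap_(X : {set A} | dominant pr B X) X.

Definition connected_set (pr : V -> rel A) (x : A) : {set A} :=
  TC pr [set: A] :\: (TC pr ([set: A] :\ x) :|: [set x]).

Definition connector (pr : V -> rel A) (x : A) : Prop :=
  connected_set pr x != set0.

End Voting.

(* Main.v *)
Require Import Defs.
From mathcomp Require Import all_boot all_order all_algebra.

Set Implicit Arguments. Unset Strict Implicit.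
Section S.
Variables (A V : finType) (pr : V -> rel A).

Lemma smaj_asym (a b : A) : smaj pr a b -> ~~ smaj pr b a.
Proof. by rewrite /smaj => /andP[_ h]; apply/negP => /andP[]; rewrite (negbTE h). Qed.

Arguments smaj_asym {a b}.
Lemma domP (B X : {set A}) : reflect (X != set0 /\ X \subset B /\
  (forall a b, a \in X -> b \in B -> b \notin X -> smaj pr a b)) (dominant pr B X).
Proof.
apply: (iffP and3P) => [[h1 h2 /forallP h3]|[h1 [h2 h3]]]; split => //.
  split => // a b aX bB bX.
  by move: (h3 a) => /implyP/(_ aX)/forallP/(_ b)/implyP; apply; rewrite inE bX.
apply/forallP => a; apply/implyP => aX; apply/forallP => b; apply/implyP.
by rewrite inE => /andP[bX bB]; apply: h3.
Qed.

Lemma dom_chain (B X Y : {set A}) : dominant pr B X -> dominant pr B Y -> X \subset Y \/ Y \subset X.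
Proof.
move=> /domP[_ [XB hX]] /domP[_ [YB hY]].
case: (boolP (X \subset Y)) => [|/subsetPn[a aX aY]]; first by left.
right; apply/subsetP => b bY; apply/negPn/negP => bX.
have h1 := hX a b aX (subsetP YB b bY) bX.
have h2 := hY b a bY (subsetP XB a aX) aY.
by move: (smaj_asym h1); rewrite h2.
Qed.

Lemma TC_min (B X : {set A}) : dominant pr B X -> TC pr B \subset X.
Proof. by move=> h; apply: (bigcap_inf X). Qed.

Lemma TC_dom (B : {set A}) : B != set0 -> dominant pr B (TC pr B).
Proof.
move=> B0.
have hB : dominant pr B B.
  apply/domP; split => //; split => // a b _ bB; by rewrite bB.
case: (@arg_minnP _ B (dominant pr B) (fun X => #|X|) hB) => X0 hX0 hmin.
suff -> : TC pr B = X0 by [].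
apply/eqP; rewrite eqEsubset TC_min //=.
apply/bigcapsP => X hX.
case: (dom_chain hX0 hX) => // XX0.
have c := hmin X hX.
by have /eqP <- : X == X0 by rewrite eqEcard XX0 c.
Qed.
End S.

Theorem lemma3 (A V : finType) (pr : V -> rel A) :
  0 < #|V| -> profile pr ->
  forall x y : A,
    connector pr x -> y \in connected_set pr x ->
    connected_set pr y \subset connected_set pr x
    \/ (forall z : A, z \in [set: A] :\: [set x; y] -> smaj pr x z).
Proof.
move=> _ _ x y _.
rewrite /connected_set !inE negb_or => /andP[/andP[yTx yx] yT].
have nx : setT :\ x != set0 by apply/set0Pn; exists y; rewrite !inE yx.
have ny : setT :\ y != set0 by apply/set0Pn; exists x; rewrite !inE eq_sym yx.
have /domP[Tx0 [TxB hTx]] := TC_dom pr nx.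
have /domP[Ty0 [TyB hTy]] := TC_dom pr ny.
set T := TC pr setT in yT *; set Tx := TC pr (setT :\ x) in yTx Tx0 TxB hTx *; set Ty := TC pr (setT :\ y) in Ty0 TyB hTy *.
have TxB' : Tx \subset setT :\: [set x; y].
  apply/subsetP => z zT; have := subsetP TxB z zT; rewrite !inE !andbT negb_or => ->.
  by apply/negP => /eqP ?; subst z; rewrite zT in yTx.
have domTx2 : dominant pr (setT :\: [set x; y]) Tx.
  apply/domP; split => //; split => // a b aT; rewrite !inE negb_or => /andP[/andP[bx _] _] bT.
  by apply: hTx => //; rewrite !inE bx.
have yTy : y \notin Ty by apply/negP => /(subsetP TyB); rewrite !inE eqxx.
have noT : forall X, dominant pr setT X -> y \notin X -> False.
  by move=> X /TC_min /subsetP /(_ y yT) ->.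
case: (boolP (x \in Ty)) => xTy.
  case: (boolP (Ty :\ x == set0)) => [/eqP e|ne].
    right => z; rewrite !inE negb_or => /andP[/andP[zx zy] _].
    apply: hTy => //; first by rewrite !inE zy.
    apply/negP => zTy; have : z \in Ty :\ x by rewrite !inE zx.
    by rewrite e inE.
  have dom2 : dominant pr (setT :\: [set x; y]) (Ty :\ x).
    apply/domP; split => //; split.
      apply/subsetP => z; rewrite !inE => /andP[zx zTy].
      have := subsetP TyB z zTy; rewrite !inE => /andP[zy _].
      by rewrite negb_or zx zy.
    move=> a b; rewrite !inE negb_or => /andP[ax aTy] /andP[/andP[bx by_] _].
    rewrite bx /= => bTy; apply: hTy => //; by rewrite !inE by_.
  have sub : Tx \subset Ty :\ x.
    case: (dom_chain domTx2 dom2) => // s.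
    suff: dominant pr (setT :\ x) (Ty :\ x) by move/TC_min.
    apply/domP; split => //; split.
      by apply/subsetP => z; rewrite !inE => /andP[-> _].
    move=> a b aT; rewrite !inE => /andP[bx _]; rewrite bx /= => bTy.
    case: (eqVneq b y) => [->|by_].
      by apply: hTx; [apply: (subsetP s) | rewrite !inE yx | ].
    by apply: hTy; [move: aT; rewrite !inE => /andP[] | rewrite !inE by_ |].
  left; apply/subsetP => z; rewrite !inE !negb_or => /andP[/andP[zTy zy] zT].
  rewrite zT andbT; apply/andP; split.
    by apply/negP => /(subsetP sub); rewrite !inE (negbTE zTy) andbF.
  by apply/negP => /eqP ?; subst z; rewrite xTy in zTy.
have TyB' : Ty \subset setT :\: [set x; y].
  apply/subsetP => z zT; rewrite !inE andbT negb_or; have := subsetP TyB z zT.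
  rewrite !inE andbT => ->; rewrite andbT; by apply: contraNneq xTy => <-.
have domTy2 : dominant pr (setT :\: [set x; y]) Ty.
  apply/domP; split => //; split => // a b aT; rewrite !inE negb_or => /andP[/andP[_ by_] _] bT.
  by apply: hTy => //; rewrite !inE by_.
case: (dom_chain domTx2 domTy2) => s.
  exfalso; apply: (noT Tx); last by [].
  apply/domP; split => //; split; first exact: subsetT.
  move=> a b aT _ bT; case: (eqVneq b x) => [->|bx].
    by apply: hTy; [apply: (subsetP s) | rewrite !inE eq_sym yx |].
  by apply: hTx; rewrite // !inE bx.
exfalso; apply: (noT Ty); last by [].
apply/domP; split => //; split; first exact: subsetT.
move=> a b aT _ bT; case: (eqVneq b y) => [->|by_].
  by apply: hTx; [apply: (subsetP s) | rewrite !inE yx |].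
by apply: hTy; rewrite // !inE by_.
Qed.
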